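(* Let $p$ be a prime, $R$ a ring of characteristic $p$, $R[x]$ the polynomial ring in one variable, $a\in R\setminus\{0\}$, and $\phi\in\operatorname{Aut}_RR[x]$ defined by $\phi(x)=x+a$. If $a$ is not a zero-divisor of $R$, then $R[x]^{\phi}=R[x^p-a^{p-1}x]$.
   Context: $R[x]^{\phi}:=\{u\in R[x]\mid\phi(u)=u\}$. *)

(* Defs.v *)
From HB Require Import structures.
From mathcomp Require Import all_boot all_order all_algebra.
Set Implicit Arguments. Unset Strict Implicit. Unset Printing Implicit Defensive.
Import GRing.Theory.
Local Open Scope ring_scope.

Definition phi_shift (R : comNzRingType) (a : R) (u : {poly R}) : {poly R} :=
  u \Po ('X + a%:P).

Definition fixed_ring (R : comNzRingType) (a : R) : pred {poly R} :=
  fun u => phi_shift a u == u.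

Definition gen_subalg (R : comNzRingType) (t : {poly R}) : {poly R} -> Prop :=
  fun u => exists r : {poly R}, u = r \Po t.

(* Main.v *)
Require Import Defs.
From HB Require Import structures.
From mathcomp Require Import all_boot all_order all_algebra.
From mathcomp Require Import zify ring.
Import GRing.Theory.
Local Open Scope ring_scope.

Section Aux.
Variable R : comNzRingType.
Variable a : R.

Definition Eop (s : {poly R}) : {poly R} :=
  s \Po ('X + a%:P) - s - a *: s^`().

Lemma size_deriv_le (s : {poly R}) : (size s^`() <= (size s).-1)%N.
Proof. exact: size_poly. Qed.

Lemma Eop_MXaddC (q : {poly R}) c :
  Eop (q * 'X + c%:P) = Eop q * 'X + a *: (a *: q^`() + Eop q).
Proof.
rewrite /Eop comp_poly_MXaddC derivMXaddC.
rewrite !scalerDr -!mul_polyC.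
ring.
Qed.

Lemma size_Eop (s : {poly R}) : (size (Eop s) <= (size s).-2)%N.
Proof.
elim/poly_ind: s => [|q c IH].
  by rewrite /Eop comp_poly0 deriv0 scaler0 !subr0 size_poly0.
rewrite Eop_MXaddC.
have [->|qn0] := eqVneq q 0.
  rewrite /Eop comp_poly0 deriv0 scaler0 !subr0 mul0r !add0r scaler0 size_poly0.
  done.
rewrite size_MXaddC (negPf qn0) /=.
apply: (leq_trans (size_polyD _ _)); rewrite geq_max; apply/andP; split.
  have [->|En0] := eqVneq (Eop q) 0; first by rewrite mul0r size_poly0.
  rewrite size_mulX //.
  have h1 : (0 < size (Eop q))%N by rewrite size_poly_gt0.
  move: IH h1; move: (size (Eop q)) (size q) => x y; lia.
apply: (leq_trans (size_scale_leq _ _)).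
apply: (leq_trans (size_polyD _ _)); rewrite geq_max; apply/andP; split.
  apply: (leq_trans (size_scale_leq _ _)).
  by apply: (leq_trans (size_deriv_le _)).
move: IH; move: (size (Eop q)) (size q) => x y; lia.
Qed.

End Aux.
Arguments Eop {R}.
Arguments size_Eop {R}.

Lemma nat_unit_pchar (R : comNzRingType) (p m : nat) (x : R) :
  p \in [pchar R] -> (0 < m < p)%N -> x *+ m = 0 -> x = 0.
Proof.
move=> chp /andP[m0 mp] hx.
have pp : prime p := pcharf_prime chp.
have p0 : (0 < p)%N := prime_gt0 pp.
have [k _ hk] := Bezoutr m p0.
have cop : coprime p m.
  rewrite prime_coprime //; apply/negP => /(dvdn_leq m0); lia.
rewrite gcdnC (eqP cop) in hk.
case/dvdnP: hk => j hj.
have : x *+ (1 + k * m) = x.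
  by rewrite mulrnDr mulr1n mulnC mulrnA hx mul0rn addr0.
by rewrite hj mulrnA (mulrn_pchar chp) => <-.
Qed.

Arguments nat_unit_pchar {R p m x}.

Lemma key_const (p : nat) (R : comNzRingType) (a : R) (s : {poly R}) :
  p \in [pchar R] ->
  (forall b : R, a * b = 0 -> b = 0) ->
  s \Po ('X + a%:P) = s -> (size s <= p)%N -> (size s <= 1)%N.
Proof.
move=> chp nzd hs sp.
rewrite leqNgt; apply/negP => s1.
have hE := size_Eop a s.
have : Eop a s = - (a *: s^`()) by rewrite /Eop hs subrr sub0r.
move=> e; rewrite e size_polyN in hE.
set n := (size s).-2 in hE.
have hc : (a *: s^`())`_n = 0 by rewrite nth_default.
rewrite coefZ coef_deriv in hc.
have := nzd _ hc => h.
have : s`_n.+1 = 0.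
  apply: (nat_unit_pchar chp _ h); rewrite /n; lia.
have -> : n.+1 = (size s).-1 by rewrite /n; lia.
move/eqP; rewrite -lead_coefE lead_coef_eq0 => /eqP s0.
by rewrite s0 size_poly0 in s1.
Qed.

Section Main.
Variable p : nat.
Variable R : comNzRingType.
Variable a : R.
Hypothesis chp : p \in [pchar R].

Let pp : prime p := pcharf_prime chp.
Let p2 : (1 < p)%N := prime_gt1 pp.

Definition tt : {poly R} := 'X^p - (a ^+ p.-1) *: 'X.

Lemma size_tt : size tt = p.+1.
Proof.
rewrite /tt size_polyDl size_polyXn //.
rewrite size_polyN; apply: (leq_ltn_trans (size_scale_leq _ _)).
by rewrite size_polyX ltnS.
Qed.

Lemma monic_tt : tt \is monic.
Proof.
apply/monicP; rewrite /tt lead_coefDl ?lead_coefXn //.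
rewrite size_polyN size_polyXn; apply: (leq_ltn_trans (size_scale_leq _ _)).
by rewrite size_polyX ltnS.
Qed.

Lemma tt_fixed : tt \Po ('X + a%:P) = tt.
Proof.
have chP : p \in [pchar {poly R}] by rewrite pchar_poly.
have F := pFrobenius_autD_comm chP (mulrC 'X a%:P).
rewrite !pFrobenius_autE in F.
rewrite /tt comp_polyB comp_Xn_poly F comp_polyZ comp_polyX.
rewrite -polyC_exp.
have -> : a ^+ p = a ^+ p.-1 * a by rewrite -exprSr prednK // prime_gt0.
rewrite polyCM scalerDr -!mul_polyC.
ring.
Qed.

End Main.

Import Pdiv.Ring.

Theorem lemma2p4 (p : nat) (R : comNzRingType) (a : R) :
  prime p -> p \in [pchar R] -> a != 0 ->
  (forall b : R, a * b = 0 -> b = 0) ->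
  forall u : {poly R},
    u \in fixed_ring a <->
    gen_subalg ('X^p - (a ^+ p.-1) *: 'X) u.
Proof.
move=> pp chp an0 nzd u.
have p2 : (1 < p)%N := prime_gt1 pp.
have ht := @tt_fixed p R a chp.
have mt := @monic_tt p R a chp.
have st := @size_tt p R a chp.
change ('X^p - _ *: 'X) with (tt p R a).
move: ht mt st; move: (tt p R a) => t ht mt st.
rewrite unfold_in /fixed_ring /phi_shift.
split; last first.
  by case=> r ->; apply/eqP; rewrite -comp_polyA ht.
move=> /eqP hu.
suff H : forall n (v : {poly R}), (size v <= n)%N -> v \Po ('X + a%:P) = v ->
    exists r, v = r \Po t by exact: (H _ u (leqnn _) hu).
elim=> [|n IH] v.
  by rewrite size_poly_leq0 => /eqP -> _; exists 0; rewrite comp_poly0.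
move=> sv hv.
have ss : (size (rmodp v t) < size t)%N by rewrite ltn_rmodp monic_neq0.
have ev := Pdiv.RingMonic.rdivp_eq mt v.
move: (rdivp v t) (rmodp v t) ev ss => d s ev ss.
have ss' : (size (s \Po ('X + a%:P)) < size t)%N.
  apply: leq_ltn_trans (size_comp_poly_leq _ _) _.
  rewrite size_XaddC /= muln1 st.
  move: ss; rewrite st; move: (size s) => x; lia.
have e2 : v \Po ('X + a%:P) = (d \Po ('X + a%:P)) * t + (s \Po ('X + a%:P)).
  by rewrite {1}ev comp_polyD comp_polyM ht.
have hd : d \Po ('X + a%:P) = d.
  have := Pdiv.RingMonic.rdivp_addl_mul_small mt d ss.
  by rewrite -ev -hv e2 Pdiv.RingMonic.rdivp_addl_mul_small.
have hs : s \Po ('X + a%:P) = s.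
  have := Pdiv.RingMonic.rmodp_addl_mul_small mt d ss.
  by rewrite -ev -hv e2 Pdiv.RingMonic.rmodp_addl_mul_small.
have s1 : (size s <= 1)%N.
  apply: (@key_const p R a s chp nzd hs).
  by move: ss; rewrite st.
have sc := size1_polyC s1.
have [d0|dn0] := eqVneq d 0.
  by exists (s`_0)%:P; rewrite ev d0 mul0r add0r comp_polyC.
have sd : (size d <= n)%N.
  have e3 : size v = (size d + size t).-1.
    rewrite ev size_polyDl size_Mmonic //.
    have : (0 < size d)%N by rewrite size_poly_gt0.
    move: ss; move: (size s) (size d) (size t) => x y z; lia.
  move: sv p2; rewrite e3 st; move: (size d) => y; lia.
have [r' hr'] := IH d sd hd.
exists (r' * 'X + (s`_0)%:P).
by rewrite comp_poly_MXaddC -hr' ev {1}sc.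
Qed.
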